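(* Let $f:A\to B$ be a ring homomorphism, $\mathfrak b$ an ideal of $B$, and $A\bowtie^f\mathfrak b:=\{(a,f(a)+b): a\in A,\ b\in\mathfrak b\}\subseteq A\times B$. For a maximal ideal $\mathfrak m$ of $A$ let $S_{\mathfrak m}:=f(A\setminus\mathfrak m)+\mathfrak b$, $\mathfrak b_{S_{\mathfrak m}}:=\mathfrak bB_{S_{\mathfrak m}}$, and $f_{\mathfrak m}:A_{\mathfrak m}\to B_{S_{\mathfrak m}}$ the ring homomorphism induced by $f$. Assume that for every maximal ideal $\mathfrak m$ of $A$ containing $f^{-1}(\mathfrak b)$, either $f_{\mathfrak m}$ is surjective or $f^{-1}(\mathfrak b)A_{\mathfrak m}\neq\{0\}$. Then the following are equivalent: (i) $A\bowtie^f\mathfrak b$ has weak global dimension at most 1; (ii) $A$ has weak global dimension at most 1, $B_{\mathfrak n}$ is a valuation domain for every maximal ideal $\mathfrak n$ of $B$ not containing $\mathfrak b$, and $\mathfrak b_{S_{\mathfrak m}}=\{0\}$ for every maximal ideal $\mathfrak m$ of $A$ containing $f^{-1}(\mathfrak b)$.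
   Context: All rings are commutative with identity. A ring $R$ has weak global dimension at most 1 if $R_{\mathfrak p}$ is a valuation domain for every prime (equivalently every maximal) ideal $\mathfrak p$ of $R$. $B_{S_{\mathfrak m}}$ denotes the localization of $B$ at the multiplicative set $S_{\mathfrak m}$ (possibly zero). *)

(* Defs.v *)
From HB Require Import structures.
From mathcomp Require Import all_boot all_order all_algebra ring.
Set Implicit Arguments. Unset Strict Implicit. Unset Printing Implicit Defensive.
Import GRing.Theory.
Local Open Scope ring_scope.

Section Ideals.
Variable R : comPzRingType.

Definition is_ideal (I : {pred R}) : Prop :=
  [/\ 0 \in I,
      (forall x y, x \in I -> y \in I -> x + y \in I) &
      (forall r x, x \in I -> r * x \in I)].

Record ideal := Ideal { ideal_pred :> {pred R}; ideal_is_ideal : is_ideal ideal_pred }.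

Definition prime_ideal (P : {pred R}) : Prop :=
  [/\ is_ideal P, 1 \notin P &
      (forall x y, x * y \in P -> x \in P \/ y \in P)].

Definition maximal_ideal (M : {pred R}) : Prop :=
  [/\ is_ideal M, 1 \notin M &
      (forall J : {pred R}, is_ideal J -> {subset M <= J} ->
         1 \in J \/ {subset J <= M})].

Definition compl (P : {pred R}) : R -> Prop := fun x => x \notin P.

End Ideals.

(* Localization S^{-1}R at a multiplicative set S : R -> Prop, written out
   on representatives: a fraction r/s is a pair (r, s) with s in S. *)
Section Localization.
Variables (R : comPzRingType) (S : R -> Prop).

Definition in_loc (x : R * R) : Prop := S x.2.

Definition loc_eq (x y : R * R) : Prop :=
  exists2 v, S v & v * (x.1 * y.2 - y.1 * x.2) = 0.

Definition loc_mul (x y : R * R) : R * R := (x.1 * y.1, x.2 * y.2).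
Definition loc0 : R * R := (0, 1).
Definition loc1 : R * R := (1, 1).

Definition loc_valuation_domain : Prop :=
  [/\ ~ loc_eq loc1 loc0,
      (forall x y, in_loc x -> in_loc y -> loc_eq (loc_mul x y) loc0 ->
         loc_eq x loc0 \/ loc_eq y loc0) &
      (forall x y, in_loc x -> in_loc y ->
         (exists2 z, in_loc z & loc_eq (loc_mul x z) y) \/
         (exists2 z, in_loc z & loc_eq (loc_mul y z) x))].

End Localization.

(* weak global dimension at most 1: R_p is a valuation domain for every
   prime ideal p of R *)
Definition weak_gldim_le1 (R : comPzRingType) : Prop :=
  forall P : {pred R}, prime_ideal P -> loc_valuation_domain (compl P).

(* Amalgamated algebra A ⋈^f b = {(a, f a + β) : a ∈ A, β ∈ b} ⊆ A × B *)
Section Amalgamation.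
Variables (A B : comPzRingType) (f : {rmorphism A -> B}) (b : ideal B).

Definition dupl_pred : {pred A * B} := fun x => x.2 - f x.1 \in b.

Lemma dupl_subring_closed : subring_closed dupl_pred.
Proof.
case: (ideal_is_ideal b) => b0 bD bM.
have bN : forall x, x \in b -> - x \in b.
  by move=> x xb; rewrite -mulN1r; apply: bM.
split.
- by rewrite /dupl_pred unfold_in /= rmorph1 subrr.
- case=> [a1 b1] [a2 b2]; rewrite /dupl_pred !unfold_in /= => h1 h2.
  rewrite rmorphB /=.
  have -> : b1 - b2 - (f a1 - f a2) = (b1 - f a1) + - (b2 - f a2) by ring.
  by apply: bD => //; apply: bN.
- case=> [a1 b1] [a2 b2]; rewrite /dupl_pred !unfold_in /= => h1 h2.
  rewrite rmorphM /=.
  have -> : b1 * b2 - f a1 * f a2 =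
     b2 * (b1 - f a1) + f a1 * (b2 - f a2) by ring.
  by apply: bD; apply: bM.
Qed.

HB.instance Definition _ := GRing.isSubringClosed.Build (A * B)%type dupl_pred
  dupl_subring_closed.

Record dupl := Dupl { dupl_val : A * B; _ : dupl_val \in dupl_pred }.

HB.instance Definition _ := [isSub for dupl_val].
HB.instance Definition _ := [Choice of dupl by <:].
HB.instance Definition _ := GRing.SubChoice_isSubComPzRing.Build _ _ dupl dupl_subring_closed.

End Amalgamation.

Definition Sm (A B : comPzRingType) (f : {rmorphism A -> B})
  (m : {pred A}) (b : {pred B}) : B -> Prop :=
  fun y => exists a, exists2 beta, a \notin m /\ beta \in b & y = f a + beta.

(* f_m : A_m -> B_{S_m}, a/s |-> f(a)/f(s), is surjective *)
Definition fm_surjective (A B : comPzRingType) (f : {rmorphism A -> B})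
  (m : {pred A}) (b : {pred B}) : Prop :=
  forall y : B * B, in_loc (Sm f m b) y ->
    exists2 x : A * A, in_loc (compl m) x & loc_eq (Sm f m b) (f x.1, f x.2) y.

(* Main.v *)
Require Import Defs.
From HB Require Import structures.
From mathcomp Require Import all_boot all_order all_algebra ring.
From mathcomp Require Import boolp classical_sets.
Import GRing.Theory.
Set Implicit Arguments. Unset Strict Implicit.
Local Open Scope ring_scope.

Section Gen.
Variable R : comPzRingType.
Implicit Types (P Q I M : {pred R}).

Lemma idN I x : is_ideal I -> x \in I -> - x \in I.
Proof. by case=> _ _ IM xI; rewrite -mulN1r; apply: IM. Qed.
Lemma idMr I r x : is_ideal I -> x \in I -> x * r \in I.
Proof. by case=> _ _ IM xI; rewrite mulrC; apply: IM. Qed.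
Lemma idB I x y : is_ideal I -> x \in I -> y \in I -> x - y \in I.
Proof. move=> hI xI yI; case: (hI) => _ ID _; apply: ID => //; exact: idN. Qed.

Definition DomP P := forall s r1 r2, s \notin P -> s * (r1 * r2) = 0 ->
  (exists2 v, v \notin P & v * r1 = 0) \/ (exists2 v, v \notin P & v * r2 = 0).
Definition ValP P := forall r1 r2 : R,
  (exists z1 z2 v, [/\ z2 \notin P, v \notin P & v * (r1 * z1 - r2 * z2) = 0]) \/
  (exists z1 z2 v, [/\ z2 \notin P, v \notin P & v * (r2 * z1 - r1 * z2) = 0]).

Lemma vd_intro P : 0 \in P -> DomP P -> ValP P -> loc_valuation_domain (compl P).
Proof.
move=> P0 hD hV; split.
- case=> v; rewrite /compl /loc1 /loc0 /= => vP.
  by rewrite mulr1 mul0r subr0 mulr1 => v0; move: vP; rewrite v0 P0.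
- case=> [x1 x2] [y1 y2]; rewrite /in_loc /compl /= => _ _ [v vP].
  rewrite mulr1 mul0r subr0 => hv.
  case: (hD _ _ _ vP hv) => [[w wP h]|[w wP h]]; [left|right]; exists w => //=;
  by rewrite mulr1 mul0r subr0.
- case=> [x1 x2] [y1 y2]; rewrite /in_loc /compl /= => x2P y2P.
  case: (hV (x1 * y2) (y1 * x2)) => [[z1 [z2 [v [z2P vP h]]]]|[z1 [z2 [v [z2P vP h]]]]];
    [left|right]; exists (z1, z2) => //; exists v => //=; rewrite -h; congr (_ * _); ring.
Qed.

Lemma vd_dom P : 1 \notin P -> loc_valuation_domain (compl P) -> DomP P.
Proof.
move=> P1 [_ hD _] s r1 r2 sP h.
have := hD (r1, 1) (r2, s) P1 sP; rewrite /loc_eq /= => H.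
case: H.
- by exists s => //; rewrite mulr1 mul0r subr0 -h; ring.
- by case=> v vP; rewrite mulr1 mul0r subr0 => h'; left; exists v.
- by case=> v vP; rewrite mulr1 mul0r subr0 => h'; right; exists v.
Qed.

Lemma vd_val P : 1 \notin P -> loc_valuation_domain (compl P) -> ValP P.
Proof.
move=> P1 [_ _ hV] r1 r2.
case: (hV (r1, 1) (r2, 1) P1 P1) => [[[z1 z2] z2P [v vP h]]|[[z1 z2] z2P [v vP h]]];
  [left|right]; exists z1, z2, v; split => //; rewrite -h /=; congr (_ * _); ring.
Qed.

Lemma prime_mono P Q : prime_ideal P -> prime_ideal Q -> {subset P <= Q} ->
  loc_valuation_domain (compl Q) -> loc_valuation_domain (compl P).
Proof.
move=> [hP P1 Pp] [hQ Q1 Qp] PQ VQ.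
have PQn : forall x, x \notin Q -> x \notin P.
  by move=> x xQ; apply/negP => /PQ; apply/negP.
have hD := vd_dom Q1 VQ; have hV := vd_val Q1 VQ.
case: (hP) => P0 _ _.
apply: vd_intro => //.
- move=> s r1 r2 sP h.
  case: (hD 1 s (r1 * r2) Q1); first by rewrite mul1r.
  + case=> w wQ ws; exfalso.
    have : w * s \in P by rewrite ws.
    by case/Pp => H; [move: (PQn _ wQ) | move: sP]; rewrite H.
  + case=> w wQ h2.
    case: (hD w r1 r2 wQ h2) => [[v vQ h3]|[v vQ h3]]; [left|right]; exists v => //;
    exact: PQn.
- move=> r1 r2; case: (hV r1 r2) => [[z1 [z2 [v [z2Q vQ h]]]]|[z1 [z2 [v [z2Q vQ h]]]]];
  [left|right]; exists z1, z2, v; split => //; exact: PQn.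
Qed.

Lemma max_elim M d : maximal_ideal M -> d \notin M ->
  exists c m, m \in M /\ 1 = m + c * d.
Proof.
move=> [hM M1 Mmax] dM.
pose J : {pred R} := fun e => `[< exists c m, m \in M /\ e = m + c * d >].
have hJ : is_ideal J.
  case: (hM) => M0 MD MM; split.
  - by rewrite unfold_in; apply/asboolP; exists 0, 0; rewrite M0 mul0r addr0.
  - move=> x y; rewrite !unfold_in => /asboolP[c1 [m1 [m1M ->]]] /asboolP[c2 [m2 [m2M ->]]].
    apply/asboolP; exists (c1 + c2), (m1 + m2); split; first exact: MD.
    ring.
  - move=> r x; rewrite !unfold_in => /asboolP[c1 [m1 [m1M ->]]].
    apply/asboolP; exists (r * c1), (r * m1); split; first exact: MM.
    ring.
have MJ : {subset M <= J}.
  by move=> x xM; rewrite unfold_in; apply/asboolP; exists 0, x; rewrite mul0r addr0.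
case: (Mmax J hJ MJ).
- by rewrite unfold_in => /asboolP.
- move=> JM; exfalso; move/negP: dM; apply; apply: JM.
  by rewrite unfold_in; apply/asboolP; exists 1, 0; case: hM => M0 _ _; rewrite M0 mul1r add0r.
Qed.

Lemma max_prime M : maximal_ideal M -> prime_ideal M.
Proof.
move=> hMM; case: (hMM) => hM M1 _; split => // x y xyM.
case: (boolP (x \in M)) => xM; [by left | right].
case: (max_elim hMM xM) => c [m [mM e]].
have -> : y = m * y + c * (x * y) by rewrite mulrA -mulrDl -e mul1r.
case: (hM) => _ MD MM; apply: MD; [exact: idMr | exact: MM].
Qed.

Lemma exists_max P : is_ideal P -> 1 \notin P ->
  exists M, maximal_ideal M /\ {subset P <= M}.
Proof.
move=> hP P1.
pose good (I : R -> bool) := is_ideal I /\ {subset P <= I} /\ 1 \notin I.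
have g0 : good P by split => //; split.
pose Rl := fun X Y : R -> bool => `[< good X -> good Y /\ {subset X <= Y} >].
have [|||t tmax] := @ZL_preorder (R -> bool) P Rl.
- by move=> X; apply/asboolP => gX; split.
- move=> X Y Z /asboolP h1 /asboolP h2; apply/asboolP => gX.
  case: (h1 gX) => gY XY; case: (h2 gY) => gZ YZ; split => // x /XY /YZ //.
- move=> Ch Ctot.
  pose U : R -> bool := fun x => `[< x \in P \/ exists X, [/\ Ch X, good X & x \in X] >].
  have PU : {subset P <= U} by move=> x xP; rewrite unfold_in; apply/asboolP; left.
  have XU : forall X, Ch X -> good X -> {subset X <= U}.
    by move=> X CX gX x xX; rewrite unfold_in; apply/asboolP; right; exists X.
  have UX : forall x y, x \in U -> y \in U -> exists X, [/\ good X, x \in X & y \in X] /\ {subset X <= U}.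
    move=> x y; rewrite !unfold_in => /asboolP[xP|[X [CX gX xX]]] /asboolP[yP|[Y [CY gY yY]]].
    + by exists P; split => //.
    + exists Y; split; last exact: XU.
      by split => //; case: gY => _ [PY _]; apply: PY.
    + exists X; split; last exact: XU.
      by split => //; case: gX => _ [PX _]; apply: PX.
    + case: (Ctot X Y CX CY) => /asboolP h.
      * case: (h gX) => _ XY; exists Y; split; last exact: XU.
        by split => //; apply: XY.
      * case: (h gY) => _ YX; exists X; split; last exact: XU.
        by split => //; apply: YX.
  have hU : is_ideal U.
    split.
    - by apply: PU; case: hP.
    - move=> x y xU yU; case: (UX x y xU yU) => X [[gX xX yX] XU'].
      by apply: XU'; case: gX => [[_ XD _] _]; apply: XD.
    - move=> r x xU; case: (UX x x xU xU) => X [[gX xX _] XU'].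
      by apply: XU'; case: gX => [[_ _ XM] _]; apply: XM.
  have U1 : 1 \notin U.
    rewrite unfold_in; apply/negP => /asboolP[|[X [_ gX X1]]]; first by apply/negP.
    by case: gX => _ [_ /negP]; apply.
  have gU : good U by split => //; split.
  exists U => X CX; apply/asboolP => gX; split => //; exact: XU.
- have gt : good t.
    have [//|ngt] := pselect (good t).
    have /asboolP := tmax P (introT (asboolP _) (fun gt => False_ind _ (ngt gt))).
    by case.
  exists t; case: (gt) => ht [Pt t1]; split => //; split => //.
  move=> J hJ tJ.
  case: (boolP (1 \in J)) => J1; [by left | right].
  have PJ : {subset P <= J} by move=> x /Pt /tJ.
  have gJ : good J by split => //; split.
  have /asboolP := tmax J (introT (asboolP _) (fun _ => conj gJ tJ)).
  by case.
Qed.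

End Gen.
Lemma prime_notinM (R : comPzRingType) (P : {pred R}) x y :
  prime_ideal P -> x \notin P -> y \notin P -> x * y \notin P.
Proof.
by case=> _ _ Pp xP yP; apply/negP => /Pp [] h; [move: xP | move: yP]; rewrite h.
Qed.
Section Dup.
Variables (A B : comPzRingType) (f : {rmorphism A -> B}) (b : ideal B).
Local Notation D := (dupl f b).
Definition p1 (d : D) := (val d).1.
Definition p2 (d : D) := (val d).2.
Lemma p1M x y : p1 (x * y) = p1 x * p1 y. Proof. by rewrite /p1 rmorphM. Qed.
Lemma p2M x y : p2 (x * y) = p2 x * p2 y. Proof. by rewrite /p2 rmorphM. Qed.
Lemma p1D x y : p1 (x + y) = p1 x + p1 y. Proof. by rewrite /p1 rmorphD. Qed.
Lemma p2D x y : p2 (x + y) = p2 x + p2 y. Proof. by rewrite /p2 rmorphD. Qed.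
Lemma p1N x : p1 (- x) = - p1 x. Proof. by rewrite /p1 rmorphN. Qed.
Lemma p2N x : p2 (- x) = - p2 x. Proof. by rewrite /p2 rmorphN. Qed.
Lemma p1B x y : p1 (x - y) = p1 x - p1 y. Proof. by rewrite p1D p1N. Qed.
Lemma p2B x y : p2 (x - y) = p2 x - p2 y. Proof. by rewrite p2D p2N. Qed.
Lemma p11 : p1 1 = 1. Proof. by rewrite /p1 rmorph1. Qed.
Lemma p21 : p2 1 = 1. Proof. by rewrite /p2 rmorph1. Qed.
Lemma p10 : p1 0 = 0. Proof. by rewrite /p1 rmorph0. Qed.
Lemma p20 : p2 0 = 0. Proof. by rewrite /p2 rmorph0. Qed.
Lemma eqD (x y : D) : p1 x = p1 y -> p2 x = p2 y -> x = y.
Proof.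
move=> h1 h2; apply: val_inj.
by rewrite [val x]surjective_pairing [val y]surjective_pairing; congr pair.
Qed.
Lemma pdiff (d : D) : p2 d - f (p1 d) \in b.
Proof. by have := valP d; rewrite unfold_in. Qed.

Definition mkD (x : A * B) : D := insubd 0 x.
Lemma val_mkD x : x.2 - f x.1 \in b -> val (mkD x) = x.
Proof. by move=> h; rewrite /mkD insubdK // unfold_in. Qed.
Lemma p1mk a y : y - f a \in b -> p1 (mkD (a, y)) = a.
Proof. by move=> h; rewrite /p1 val_mkD. Qed.
Lemma p2mk a y : y - f a \in b -> p2 (mkD (a, y)) = y.
Proof. by move=> h; rewrite /p2 val_mkD. Qed.

Let hb := ideal_is_ideal b.
Lemma b0 : 0 \in b. Proof. by case: hb. Qed.
Lemma bM r x : x \in b -> r * x \in b. Proof. by case: hb => _ _; apply. Qed.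
Lemma bMr r x : x \in b -> x * r \in b. Proof. by move=> h; rewrite mulrC bM. Qed.
Lemma bD x y : x \in b -> y \in b -> x + y \in b. Proof. by case: hb => _ HD _; apply: HD. Qed.
Lemma bN x : x \in b -> - x \in b. Proof. by move=> h; apply: (idN hb h). Qed.

Definition io a : D := mkD (a, f a).
Lemma ioP a : f a - f (a, f a).1 \in b. Proof. by rewrite subrr b0. Qed.
Lemma p1io a : p1 (io a) = a. Proof. exact: p1mk (ioP a). Qed.
Lemma p2io a : p2 (io a) = f a. Proof. exact: p2mk (ioP a). Qed.
Definition zb y : D := mkD (0, y).
Lemma zbP y : y \in b -> y - f 0 \in b. Proof. by rewrite rmorph0 subr0. Qed.
Lemma p1zb y : p1 (zb y) = 0.
Proof. rewrite /zb /mkD /insubd; case: insubP => [u _ hu|_] /=; [by rewrite /p1 hu | exact: p10]. Qed.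
Lemma p2zb y : y \in b -> p2 (zb y) = y.
Proof. by move=> h; apply: p2mk; apply: zbP. Qed.
Lemma p2b (d : D) : p1 d = 0 -> p2 d \in b.
Proof. by move=> h; have := pdiff d; rewrite h rmorph0 subr0. Qed.
Lemma zbE (d : D) : p1 d = 0 -> d = zb (p2 d).
Proof. by move=> h; apply: eqD; rewrite ?p1zb ?p2zb //; apply: p2b. Qed.
Lemma splitD (d : D) : d = io (p1 d) + zb (p2 d - f (p1 d)).
Proof.
apply: eqD; rewrite ?p1D ?p2D ?p1io ?p2io ?p1zb ?p2zb ?addr0 ?pdiff //.
by rewrite addrC subrK.
Qed.
End Dup.
Arguments p1 {A B f b}.
Arguments p2 {A B f b}.
Lemma prime_preim (T R : comPzRingType) (g : T -> R) (P : {pred R}) :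
  g 0 = 0 -> g 1 = 1 -> (forall x y, g (x + y) = g x + g y) ->
  (forall x y, g (x * y) = g x * g y) -> prime_ideal P ->
  prime_ideal (fun x => g x \in P : bool).
Proof.
move=> g0 g1 gD gM [[P0 PD PM] P1 Pp]; split; rewrite ?unfold_in ?g1 //.
- split; rewrite ?unfold_in ?g0 // => x y; rewrite !unfold_in ?gD ?gM; by [apply: PD | apply: PM].
- by move=> x y; rewrite !unfold_in gM; apply: Pp.
Qed.

Section Main.
Variables (A B : comPzRingType) (f : {rmorphism A -> B}) (b : ideal B).
Local Notation D := (dupl f b).

Lemma dir1 : weak_gldim_le1 D ->
  (forall m : {pred A}, maximal_ideal m -> (forall a, f a \in b -> a \in m) ->
     fm_surjective f m b \/
     (exists2 a : A, f a \in b & ~ loc_eq (compl m) (a, 1) (0, 1))) ->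
  [/\ weak_gldim_le1 A,
       (forall n : {pred B}, maximal_ideal n -> ~ {subset b <= n} ->
          loc_valuation_domain (compl n)) &
       (forall m : {pred A}, maximal_ideal m -> (forall a, f a \in b -> a \in m) ->
          forall beta, beta \in b -> loc_eq (Sm f m b) (beta, 1) (0, 1))].
Proof.
move=> HD H.
have ioM x y : io f b (x * y) = io f b x * io f b y.
  by apply: eqD; rewrite ?p1M ?p2M ?p1io ?p2io ?rmorphM.
split.
- move=> P hP.
  have hM : prime_ideal (fun d : D => p1 d \in P : bool).
    by apply: prime_preim => //; (exact: p10 || exact: p11 || exact: p1D || exact: p1M).
  have VM := HD _ hM.
  have M1 : (1 : D) \notin (fun d : D => p1 d \in P : bool).
    by case: hM.
  have hDo := vd_dom M1 VM; have hVa := vd_val M1 VM.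
  case: (hP) => [[P0 _ _] P1 _].
  apply: vd_intro => //.
  + move=> s r1 r2 sP h.
    case: (hDo (io f b s) (io f b r1) (io f b r2)).
    * by rewrite unfold_in p1io.
    * by rewrite -!ioM h; apply: eqD; rewrite ?p1io ?p2io ?rmorph0 ?p10 ?p20.
    * case=> v; rewrite unfold_in => vP h1; left; exists (p1 v) => //.
      by have := congr1 p1 h1; rewrite p1M p1io p10.
    * case=> v; rewrite unfold_in => vP h1; right; exists (p1 v) => //.
      by have := congr1 p1 h1; rewrite p1M p1io p10.
  + move=> r1 r2; case: (hVa (io f b r1) (io f b r2)) =>
      [[z1 [z2 [v [z2P vP h]]]]|[z1 [z2 [v [z2P vP h]]]]]; [left|right];
      exists (p1 z1), (p1 z2), (p1 v); move: z2P vP; rewrite !unfold_in; split => //;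
      by have := congr1 p1 h; rewrite !(p1M, p1B, p1io) p10.
- move=> n hn nb.
  have [b0 [b0b b0n]] : exists b0, b0 \in b /\ b0 \notin n.
    case: (pselect (exists b0, b0 \in b /\ b0 \notin n)) => // no; exfalso.
    by apply: nb => x xb; case: (boolP (x \in n)) => // xn; exfalso; apply: no; exists x.
  have pn := max_prime hn.
  case: (pn) => [[n0 _ _] n1 _].
  have hM : prime_ideal (fun d : D => p2 d \in n : bool).
    by apply: prime_preim => //; (exact: p20 || exact: p21 || exact: p2D || exact: p2M).
  have VM := HD _ hM.
  have M1 : (1 : D) \notin (fun d : D => p2 d \in n : bool) by case: hM.
  have hDo := vd_dom M1 VM; have hVa := vd_val M1 VM.
  pose psi y := zb f b (b0 * y).
  have p1psi y : p1 (psi y) = 0 by rewrite p1zb.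
  have p2psi y : p2 (psi y) = b0 * y by rewrite p2zb // bMr.
  apply: vd_intro => //.
  + move=> s r1 r2 sP h.
    case: (hDo (psi s) (psi r1) (psi r2)).
    * by rewrite unfold_in p2psi prime_notinM.
    * apply: eqD; rewrite ?p1M ?p2M ?p1psi ?p2psi ?p10 ?p20 ?mul0r //.
      by rewrite -[RHS](mulr0 (b0 * b0 * b0)) -h; ring.
    * case=> v; rewrite unfold_in => vP h1; left; exists (p2 v * b0); first exact: prime_notinM.
      by have := congr1 p2 h1; rewrite p2M p2psi p20 mulrA.
    * case=> v; rewrite unfold_in => vP h1; right; exists (p2 v * b0); first exact: prime_notinM.
      by have := congr1 p2 h1; rewrite p2M p2psi p20 mulrA.
  + move=> r1 r2; case: (hVa (psi r1) (psi r2)) =>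
      [[z1 [z2 [v [z2P vP h]]]]|[z1 [z2 [v [z2P vP h]]]]]; [left|right];
      exists (p2 z1), (p2 z2), (p2 v * b0); move: z2P vP; rewrite !unfold_in => z2P vP;
      (split => //; first exact: prime_notinM);
      have := congr1 p2 h; rewrite !(p2M, p2B, p2psi) p20 => <-; ring.
- move=> m hm fbm be beb.
  have pm := max_prime hm.
  case: (pm) => [[m0 _ _] m1 _].
  have hM : prime_ideal (fun d : D => p1 d \in m : bool).
    by apply: prime_preim => //; (exact: p10 || exact: p11 || exact: p1D || exact: p1M).
  have VM := HD _ hM.
  have M1 : (1 : D) \notin (fun d : D => p1 d \in m : bool) by case: hM.
  have hDo := vd_dom M1 VM.
  have C : forall a, f a \in b -> (exists2 t, t \notin m & t * a = 0) \/
                                 (exists2 w, Sm f m b w & w * be = 0).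
    move=> a fa.
    have xP : 0 - f a \in b by rewrite sub0r bN.
    case: (hDo 1 (mkD f b (a, 0)) (zb f b be)) => //.
    * apply: eqD; rewrite ?p1M ?p2M ?p1zb ?p2zb ?p1mk ?p2mk ?p10 ?p20 ?mulr0 ?mul0r ?mul1r //.
    * case=> v; rewrite unfold_in => vm h; left; exists (p1 v) => //.
      by have := congr1 p1 h; rewrite p1M p1mk // p10.
    * case=> v; rewrite unfold_in => vm h; right; exists (p2 v).
      - exists (p1 v), (p2 v - f (p1 v)); first by split => //; apply: pdiff.
        by rewrite addrC subrK.
      - by have := congr1 p2 h; rewrite p2M p2zb // p20.
  case: (H m hm fbm) => [surj | [a fa hne]].
  + case: (surj (be, 1)).
      by exists 1, 0; [split => //; exact: b0 | rewrite rmorph1 addr0].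
    move=> [x1 x2]; rewrite /in_loc /compl /= => x2m [w Sw hw].
    case: (Sw) => s [g [sm gb] ew].
    have fa : f (s * x1) \in b.
      have -> : f (s * x1) = (w * f x2) * be - f x1 * g.
        apply/eqP; rewrite -subr_eq0.
        rewrite [X in X == 0](_ : _ = (w * (f x1 * 1 - be * f x2))); first by rewrite hw.
        by rewrite rmorphM ew; ring.
      by apply: bD; [apply: bM | apply: bN; apply: bM].
    case: (C (s * x1) fa) => [[t tm ht]|[w' Sw' hw']]; last by exists w' => //; rewrite mulr1 mul0r subr0.
    exists (w * f (t * s * x2)).
    * exists (s * (t * s * x2)), (g * f (t * s * x2)).
        by split; [rewrite !prime_notinM | apply: bMr].
      by rewrite ew rmorphM; ring.
    * have -> : w * f (t * s * x2) * (be * 1 - 0 * 1) =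
          -(f t * f s) * (w * (f x1 * 1 - be * f x2)) + w * f (t * (s * x1)).
        by rewrite !rmorphM; ring.
      by rewrite hw ht rmorph0 !mulr0 addr0.
  + case: (C a fa) => [[t tm ht]|[w Sw hw]].
    * by exfalso; apply: hne; exists t => //; rewrite mulr1 mul0r subr0.
    * by exists w => //; rewrite mulr1 mul0r subr0.
Qed.

Lemma dir2 :
  [/\ weak_gldim_le1 A,
       (forall n : {pred B}, maximal_ideal n -> ~ {subset b <= n} ->
          loc_valuation_domain (compl n)) &
       (forall m : {pred A}, maximal_ideal m -> (forall a, f a \in b -> a \in m) ->
          forall beta, beta \in b -> loc_eq (Sm f m b) (beta, 1) (0, 1))] ->
  weak_gldim_le1 D.
Proof.
move=> [HA HBn Hb] P hP.
case: (hP) => hPi P1 _.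
case: (exists_max hPi P1) => M [hMM PM].
apply: (prime_mono hP (max_prime hMM) PM).
have pM := max_prime hMM; case: (pM) => [[M0 MD MMul] M1 Mp].
have MB x y : x \in M -> y \in M -> x - y \in M by move=> *; apply: idB.
case: (pselect (exists b0, b0 \in b /\ zb f b b0 \notin M)) => [[b0 [b0b b0M]] | nob].
- pose psi y := zb f b (b0 * y).
  have p1psi y : p1 (psi y) = 0 by rewrite p1zb.
  have p2psi y : p2 (psi y) = b0 * y by rewrite p2zb // bMr.
  have psiM x d : psi x * d = psi (x * p2 d).
    by apply: eqD; rewrite ?p1M ?p2M ?p1psi ?p2psi ?mul0r // mulrA.
  have psi0 : psi 0 = 0 by apply: eqD; rewrite ?p1psi ?p2psi ?p10 ?p20 ?mulr0.
  have psiD x y : psi (x + y) = psi x + psi y.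
    by apply: eqD; rewrite ?p1D ?p2D ?p1psi ?p2psi ?addr0 ?mulrDr.
  pose e := psi 1.
  have eM : e \notin M by rewrite /e /psi mulr1.
  pose Q : {pred B} := fun y => psi y \in M.
  have hQ : is_ideal Q.
    split; rewrite ?unfold_in.
    - by rewrite /Q psi0.
    - by move=> x y; rewrite !unfold_in /Q psiD; apply: MD.
    - move=> r x; rewrite !unfold_in /Q => xM.
      have : psi (r * x) * e \in M.
        rewrite psiM p2psi (_ : r * x * (b0 * 1) = r * (b0 * x)); last by ring.
        by rewrite -p2psi -psiM; apply: MMul.
      by case/Mp => // h; move: eM; rewrite h.
  have psip2 d : psi (p2 d) = e * d by rewrite psiM mul1r.
  have Q1 : 1 \notin Q by rewrite unfold_in.
  have hQmax : maximal_ideal Q.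
    split => // J hJ QJ.
    case: (boolP (1 \in J)) => J1; [by left | right] => y yJ.
    rewrite unfold_in /Q; case: (boolP (psi y \in M)) => // yM; exfalso.
    case: (max_elim hMM yM) => c [m0 [m0M e1]].
    have := congr1 p2 e1; rewrite p21 p2D p2M p2psi => e2.
    move/negP: J1; apply; rewrite e2.
    case: (hJ) => _ JD JM; apply: JD.
    + by apply: QJ; rewrite unfold_in /Q psip2; apply: MMul.
    + by rewrite mulrA; apply: JM.
  have bQ : ~ {subset b <= Q}.
    move=> /(_ b0 b0b); rewrite unfold_in /Q.
    have -> : psi b0 = e * e by rewrite -psip2 p2psi mulr1.
    by apply/negP; apply: prime_notinM.
  have VQ := HBn Q hQmax bQ.
  have QD := vd_dom Q1 VQ; have QV := vd_val Q1 VQ.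
  apply: vd_intro => //.
  + move=> s r1 r2 sM h.
    case: (QD (p2 s) (p2 r1) (p2 r2)).
    * by rewrite unfold_in /Q psip2 prime_notinM.
    * by have := congr1 p2 h; rewrite !p2M p20.
    * case=> w; rewrite unfold_in => wQ hw; left; exists (psi w) => //.
      by rewrite psiM hw.
    * case=> w; rewrite unfold_in => wQ hw; right; exists (psi w) => //.
      by rewrite psiM hw.
  + move=> r1 r2; case: (QV (p2 r1) (p2 r2)) =>
      [[z1 [z2 [v [z2P vP h]]]]|[z1 [z2 [v [z2P vP h]]]]]; [left|right];
      exists (psi z1), (psi z2), (psi v); move: z2P vP; rewrite !unfold_in /Q => z2P vP;
      (split => //); rewrite psiM; rewrite !(p2M, p2B, p2psi);
      (rewrite (_ : forall x y, v * (x * (b0 * z1) - y * (b0 * z2)) = b0 * (v * (x * z1 - y * z2)));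
        last by move=> x y; ring);
      by rewrite h mulr0 psi0.
- have nob' : forall y, y \in b -> zb f b y \in M.
    move=> y yb; case: (boolP (zb f b y \in M)) => // yM; exfalso; apply: nob; by exists y.
  pose m : {pred A} := fun a => io f b a \in M.
  have io0 : io f b 0 = 0 by apply: eqD; rewrite ?p1io ?p2io ?rmorph0 ?p10 ?p20.
  have io1 : io f b 1 = 1 by apply: eqD; rewrite ?p1io ?p2io ?rmorph1 ?p11 ?p21.
  have ioD x y : io f b (x + y) = io f b x + io f b y.
    by apply: eqD; rewrite ?p1D ?p2D ?p1io ?p2io ?rmorphD.
  have ioM x y : io f b (x * y) = io f b x * io f b y.
    by apply: eqD; rewrite ?p1M ?p2M ?p1io ?p2io ?rmorphM.
  have inM d : (d \in M) = (p1 d \in m).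
    rewrite [p1 d \in m]unfold_in /m; have zM := nob' _ (pdiff d).
    apply/idP/idP => h.
    + by rewrite (_ : io f b (p1 d) = d - zb f b (p2 d - f (p1 d))); [apply: MB | rewrite {2}(splitD d) addrK].
    + by rewrite (splitD d); apply: MD.
  have hm : is_ideal m.
    split; rewrite ?unfold_in /m.
    - by rewrite io0.
    - by move=> x y; rewrite !unfold_in /m ioD; apply: MD.
    - by move=> r x; rewrite !unfold_in /m ioM; apply: MMul.
  have m1 : 1 \notin m by rewrite unfold_in /m io1.
  have hmax : maximal_ideal m.
    split => // J hJ mJ.
    have hJ' : is_ideal (fun d : D => p1 d \in J : bool).
      case: hJ => J0 JD JM; split; rewrite ?unfold_in ?p10 //.
      - by move=> x y; rewrite !unfold_in p1D; apply: JD.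
      - by move=> r x; rewrite !unfold_in p1M; apply: JM.
    case: (hMM) => _ _ /(_ _ hJ') [].
    + by move=> d; rewrite inM unfold_in => /mJ.
    + by rewrite unfold_in p11; left.
    + move=> JM; right => a aJ.
      by rewrite -(p1io f b a) -inM; apply: JM; rewrite unfold_in p1io.
  have Kill : forall be, be \in b -> exists2 V, V \notin M & V * zb f b be = 0.
    move=> be beb.
    case: (pselect (exists a0, f a0 \in b /\ a0 \notin m)) => [[a0 [fa0 a0m]]|no2].
    + have hp : 0 - f a0 \in b by rewrite sub0r bN.
      exists (mkD f b (a0, 0)); first by rewrite inM p1mk.
      by apply: eqD; rewrite ?p1M ?p2M ?p1zb ?p2zb ?p1mk ?p2mk ?mulr0 ?mul0r ?p10 ?p20.
    + have fbm : forall a, f a \in b -> a \in m.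
        move=> a fa; case: (boolP (a \in m)) => // am; exfalso; apply: no2; by exists a.
      case: (Hb m hmax fbm be beb) => w [s [g [sm gb] ew]].
      rewrite mulr1 mul0r subr0 => hw.
      have hp : w - f s \in b by rewrite ew addrC addKr.
      exists (mkD f b (s, w)); first by rewrite inM p1mk.
      by apply: eqD; rewrite ?p1M ?p2M ?p1zb ?p2zb ?p1mk ?p2mk ?mulr0 ?mul0r ?p10 ?p20.
  have VA := HA m (max_prime hmax).
  have AD := vd_dom m1 VA; have AV := vd_val m1 VA.
  apply: vd_intro => //.
  + move=> s r1 r2 sM h.
    case: (AD (p1 s) (p1 r1) (p1 r2)).
    * by rewrite -inM.
    * by have := congr1 p1 h; rewrite !p1M p10.
    * case=> w wm hw.
      have d0 : p1 (io f b w * r1) = 0 by rewrite p1M p1io.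
      case: (Kill _ (p2b d0)) => U UM hU.
      left; exists (U * io f b w); first by rewrite prime_notinM // inM p1io.
      by rewrite -mulrA (zbE d0).
    * case=> w wm hw.
      have d0 : p1 (io f b w * r2) = 0 by rewrite p1M p1io.
      case: (Kill _ (p2b d0)) => U UM hU.
      right; exists (U * io f b w); first by rewrite prime_notinM // inM p1io.
      by rewrite -mulrA (zbE d0).
  + move=> r1 r2; case: (AV (p1 r1) (p1 r2)) =>
      [[z1 [z2 [v [z2P vP h]]]]|[z1 [z2 [v [z2P vP h]]]]]; [left|right].
    * have d0 : p1 (io f b v * (r1 * io f b z1 - r2 * io f b z2)) = 0.
        by rewrite !(p1M, p1B, p1io).
      case: (Kill _ (p2b d0)) => U UM hU.
      exists (io f b z1), (io f b z2), (U * io f b v); split.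
      - by rewrite inM p1io.
      - by rewrite prime_notinM // inM p1io.
      - by rewrite -mulrA (zbE d0).
    * have d0 : p1 (io f b v * (r2 * io f b z1 - r1 * io f b z2)) = 0.
        by rewrite !(p1M, p1B, p1io).
      case: (Kill _ (p2b d0)) => U UM hU.
      exists (io f b z1), (io f b z2), (U * io f b v); split.
      - by rewrite inM p1io.
      - by rewrite prime_notinM // inM p1io.
      - by rewrite -mulrA (zbE d0).
Qed.
End Main.

Unset Implicit Arguments.

Theorem proposition4p11 (A B : comPzRingType) (f : {rmorphism A -> B})
  (b : ideal B) :
  (forall m : {pred A}, maximal_ideal m -> (forall a, f a \in b -> a \in m) ->
     fm_surjective f m b \/
     (exists2 a : A, f a \in b & ~ loc_eq (compl m) (a, 1) (0, 1))) ->
  (weak_gldim_le1 (dupl f b) <->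
   [/\ weak_gldim_le1 A,
       (forall n : {pred B}, maximal_ideal n -> ~ {subset b <= n} ->
          loc_valuation_domain (compl n)) &
       (forall m : {pred A}, maximal_ideal m -> (forall a, f a \in b -> a \in m) ->
          forall beta, beta \in b -> loc_eq (Sm f m b) (beta, 1) (0, 1))]).
Proof.
move=> H; split => [HD|]; [exact: dir1 HD H | exact: dir2].
Qed.
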